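(* Let $P$ be a prime and $D\ge1$. Let $g,r:\mathbb{Z}_P\to\mathbb{R}$ satisfy $\sum_{b\in\mathbb{Z}_P}g(b)=0$, $\sum_b|g(b)|^2=1$, $\sum_b|r(b)|^2=1$, and $C_{g,r}:=\sum_{v\in\mathbb{Z}_P}\mathcal{F}_1[g](v)\overline{\mathcal{F}_1[r](v)}\neq0$. Then for every function $f:\mathbb{Z}_P^D\to\mathbb{R}$ and every $\mathbf{x}\in\mathbb{Z}_P^D$, $$f(\mathbf{x})=C_{g,r}^{-1}\,\mathcal{S}\big[\mathcal{R}[f]\big](\mathbf{x}).$$
   Context: $\mathbb{Z}_P=\{0,\dots,P-1\}$ with arithmetic mod $P$. $\mathcal{F}_1[h](v)=P^{-1/2}\sum_{b\in\mathbb{Z}_P}h(b)e^{-2\pi i vb/P}$. The discrete ridgelet transform is $\mathcal{R}[f](\mathbf{a},b)=P^{-D/2}\sum_{\mathbf{x}\in\mathbb{Z}_P^D}f(\mathbf{x})\,r((\mathbf{a}^\top\mathbf{x}-b)\bmod P)$, and for $w:\mathbb{Z}_P^D\times\mathbb{Z}_P\to\mathbb{C}$ the discretized neural network is $\mathcal{S}[w](\mathbf{x})=P^{-D/2}\sum_{\mathbf{a}\in\mathbb{Z}_P^D,\,b\in\mathbb{Z}_P}w(\mathbf{a},b)\,g((\mathbf{a}^\top\mathbf{x}-b)\bmod P)$. *)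

(* Defs.v *)
From mathcomp Require Import all_boot all_order all_algebra.
From mathcomp Require Import reals trigo.
From mathcomp Require Import complex.
Set Implicit Arguments. Unset Strict Implicit. Unset Printing Implicit Defensive.
Import Order.TTheory GRing.Theory Num.Theory.
Local Open Scope ring_scope.
Local Open Scope complex_scope.

Definition expi (R : realType) (t : R) : R[i] := cos t +i* sin t.

Definition F1 (R : realType) (P : nat) (h : 'Z_P -> R[i]) (v : 'Z_P) : R[i] :=
  ((Num.sqrt (P%:R : R))^-1)%:C *
  \sum_(b : 'Z_P) h b * expi (- (2 * pi * ((v : nat) * (b : nat))%N%:R / P%:R)).

Definition Cgr (R : realType) (P : nat) (g r : 'Z_P -> R) : R[i] :=
  \sum_(v : 'Z_P) F1 (fun b => (g b)%:C) v * conjc (F1 (fun b => (r b)%:C) v).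

Definition dotZ (P D : nat) (a x : {ffun 'I_D -> 'Z_P}) : 'Z_P :=
  \sum_(i < D) a i * x i.

Definition ridgelet (R : realType) (P D : nat) (r : 'Z_P -> R)
  (f : {ffun 'I_D -> 'Z_P} -> R) (a : {ffun 'I_D -> 'Z_P}) (b : 'Z_P) : R :=
  ((Num.sqrt (P%:R : R)) ^+ D)^-1 *
  \sum_(x : {ffun 'I_D -> 'Z_P}) f x * r (dotZ a x - b).

Definition Snet (R : realType) (P D : nat) (g : 'Z_P -> R)
  (w : {ffun 'I_D -> 'Z_P} -> 'Z_P -> R) (x : {ffun 'I_D -> 'Z_P}) : R :=
  ((Num.sqrt (P%:R : R)) ^+ D)^-1 *
  \sum_(a : {ffun 'I_D -> 'Z_P}) \sum_(b : 'Z_P) w a b * g (dotZ a x - b).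

(* Main.v *)
Require Import Defs.
From mathcomp Require Import all_boot all_order all_algebra.
From mathcomp Require Import reals trigo.
From mathcomp Require Import complex.
From mathcomp Require Import zify ring.
Set Implicit Arguments. Unset Strict Implicit. Unset Printing Implicit Defensive.
Import Order.TTheory GRing.Theory Num.Theory.
Local Open Scope ring_scope.
Lemma dotZD (P D : nat) (a u z : {ffun 'I_D -> 'Z_P}) :
  dotZ (a + u) z = dotZ a z + dotZ u z.
Proof. by rewrite /dotZ -big_split; apply: eq_bigr => i _; rewrite ffunE mulrDl. Qed.

Lemma dotZB (P D : nat) (a y x : {ffun 'I_D -> 'Z_P}) :
  dotZ a y - dotZ a x = dotZ a (y - x).
Proof. by rewrite /dotZ -sumrB; apply: eq_bigr => i _; rewrite !ffunE mulrBr. Qed.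

Lemma Zp_unit (P : nat) (c : 'Z_P) : prime P -> c != 0 -> c \is a GRing.unit.
Proof.
move=> pP c0; have P1 : (1 < P)%N by apply: prime_gt1.
have -> : c = (val c)%:R by rewrite natr_Zp.
rewrite unitZpE // prime_coprime //.
apply/negP => /dvdnP [k] ck.
have cP : (val c < P)%N by rewrite -[X in (_ < X)%N](Zp_cast P1); exact: ltn_ord.
move: c0; case: k ck => [|k] ck.
  by apply/negP; rewrite negbK; apply/eqP/val_inj => /=; rewrite ck.
move: cP; rewrite ck mulSn; lia.
Qed.

Lemma sum_shift (V : zmodType) (P : nat) (F : 'Z_P -> V) (s : 'Z_P) :
  \sum_t F (s + t) = \sum_t F t.
Proof. by rewrite [RHS](reindex_inj (addrI s)). Qed.

Lemma T_zero (R : realType) (P D : nat) (g r : 'Z_P -> R) (z : {ffun 'I_D -> 'Z_P}) :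
  prime P -> \sum_b g b = 0 -> z != 0 ->
  \sum_(a : {ffun 'I_D -> 'Z_P}) \sum_(c : 'Z_P) r (dotZ a z + c) * g c = 0.
Proof.
move=> pP g0 z0.
have P1 : (1 < P)%N by apply: prime_gt1.
have [i zi] : exists i, z i != 0.
  case: (pickP (fun i => z i != 0)) => [i zi0 | all0]; first by exists i.
  have zE : z = 0 by apply/ffunP => j; rewrite ffunE; have := all0 j; rewrite /= => /negbFE/eqP.
  by move: z0; rewrite zE eqxx.
have zu := Zp_unit pP zi.
set S := \sum_a _.
have shift t : S = \sum_(a : {ffun 'I_D -> 'Z_P}) \sum_(c : 'Z_P) r (dotZ a z + t + c) * g c.
  pose u : {ffun 'I_D -> 'Z_P} := [ffun j => if j == i then t / z i else 0].
  have du : dotZ u z = t.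
    rewrite /dotZ (bigD1 i) //= big1 => [|j ji]; last by rewrite ffunE (negbTE ji) mul0r.
    by rewrite ffunE eqxx addr0 divrK.
  rewrite /S (reindex_inj (addIr u)) /=; apply: eq_bigr => a _.
  by rewrite dotZD du.
have H : \sum_(t : 'Z_P) S = 0.
  rewrite (eq_bigr _ (fun t _ => shift t)) exchange_big big1 //= => a _.
  rewrite exchange_big /= (eq_bigr (fun c => (\sum_t r t) * g c)) => [|c _].
    by rewrite -mulr_sumr g0 mulr0.
  rewrite -mulr_suml (eq_bigr (fun t => r ((dotZ a z + c) + t))) => [|t _]; last by rewrite addrAC.
  by rewrite (sum_shift (fun t => r t)).
move: H; rewrite sumr_const -mulr_natr => /eqP; rewrite mulf_eq0 => /orP [/eqP //|].
by rewrite card_ord pnatr_eq0.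
Qed.

Lemma Tsum (R : realType) (P D : nat) (g r : 'Z_P -> R) (a y x : {ffun 'I_D -> 'Z_P}) :
  \sum_(b : 'Z_P) r (dotZ a y - b) * g (dotZ a x - b) =
  \sum_(c : 'Z_P) r (dotZ a (y - x) + c) * g c.
Proof.
rewrite (reindex_inj (subrI (dotZ a x))) /=; apply: eq_bigr => c _.
by rewrite opprB addrA addrAC dotZB [dotZ a x + _]addrC subrK.
Qed.

Lemma real_part (R : realType) (P D : nat) (g r : 'Z_P -> R)
  (f : {ffun 'I_D -> 'Z_P} -> R) (x : {ffun 'I_D -> 'Z_P}) :
  prime P -> \sum_b g b = 0 ->
  Snet g (ridgelet r f) x = f x * \sum_(c : 'Z_P) r c * g c.
Proof.
move=> pP g0; have P1 : (1 < P)%N by apply: prime_gt1.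
set s := Num.sqrt (P%:R : R) ^+ D.
have e1 : \sum_(a : {ffun 'I_D -> 'Z_P}) \sum_(b : 'Z_P) ridgelet r f a b * g (dotZ a x - b)
   = s^-1 * \sum_y f y * \sum_(a : {ffun 'I_D -> 'Z_P}) \sum_(c : 'Z_P) r (dotZ a (y - x) + c) * g c.
  rewrite mulr_sumr.
  under [RHS]eq_bigr => y _ do rewrite mulr_sumr mulr_sumr.
  rewrite [RHS]exchange_big; apply: eq_bigr => a _.
  under [RHS]eq_bigr => y _ do rewrite -Tsum mulr_sumr mulr_sumr.
  rewrite [RHS]exchange_big; apply: eq_bigr => b _.
  rewrite /ridgelet -mulrA mulr_suml mulr_sumr; apply: eq_bigr => y _.
  by rewrite !mulrA.
rewrite /Snet e1 (bigD1 x) //= [X in _ + X]big1 => [|y yx]; last by rewrite T_zero ?mulr0 // subr_eq0.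

rewrite addr0 subrr.
rewrite (eq_bigr (fun _ => \sum_(c : 'Z_P) r c * g c)) => [|a _]; last first.
  apply: eq_bigr => c _; rewrite /dotZ big1 ?add0r // => i _; by rewrite ffunE mulr0.
have cardE : #|{ffun 'I_D -> 'Z_P}| = (P ^ D)%N by rewrite card_ffun card_ord card_ord Zp_cast.
rewrite sumr_const cardE -/s -mulr_natr.
have sP : s^-1 * s^-1 * (P ^ D)%:R = 1.
  rewrite -invfM.
  have -> : s * s = (P ^ D)%:R.
    by rewrite -expr2 -exprM mulnC exprM sqr_sqrtr ?ler0n // natrX.
  by rewrite mulVf // pnatr_eq0 expn_eq0 negb_and; apply/orP; left; rewrite -lt0n prime_gt0.
set G := \sum_(c : 'Z_P) _.
transitivity (s^-1 * s^-1 * (P ^ D)%:R * (f x * G)); first by ring.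
by rewrite sP mul1r.
Qed.
Local Open Scope complex_scope.

Lemma expiD (R : realType) (a b : R) : expi (a + b) = expi a * expi b.
Proof.
rewrite /expi cosD sinD; apply/eqP; rewrite eq_complex /=; apply/andP; split; apply/eqP; ring.
Qed.

Lemma expi0 (R : realType) : expi (0 : R) = 1.
Proof. by rewrite /expi cos0 sin0. Qed.

Lemma expiJ (R : realType) (a : R) : conjc (expi a) = expi (- a).
Proof. by rewrite /expi cosN sinN. Qed.

Lemma expiMn (R : realType) (a : R) (n : nat) : expi (n%:R * a) = expi a ^+ n.
Proof.
elim: n => [|n IH]; first by rewrite mul0r expi0 expr0.
by rewrite -addn1 natrD mulrDl expiD IH mul1r exprD expr1.
Qed.

Lemma expiN (R : realType) (a : R) : expi (- a) = (expi a)^-1.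
Proof.
have h : expi a * expi (- a) = 1 by rewrite -expiD subrr expi0.
have nz : expi a != 0 by apply/eqP => e; move: h; rewrite e mul0r => /eqP; rewrite eq_sym oner_eq0.
by rewrite -[LHS]mul1r -(mulVf nz) -mulrA h mulr1.
Qed.

Lemma omega_prim (R : realType) (P : nat) : prime P ->
  P.-primitive_root (expi (2 * pi / P%:R : R)).
Proof.
move=> pP; have P1 : (1 < P)%N by apply: prime_gt1.
have P0 : (P%:R : R) != 0 by rewrite pnatr_eq0 -lt0n prime_gt0.
have wP : expi (2 * pi / P%:R : R) ^+ P = 1.
  rewrite -expiMn mulrCA mulfV // mulr1 /expi mulr_natl cos2pi sin2pi //.
have w1 : expi (2 * pi / P%:R : R) != 1.
  apply/eqP => /eqP; rewrite /expi eq_complex /= => /andP [/eqP c1 _].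
  have : (2 * pi / P%:R : R) = 0.
    apply: cos_inj; last by rewrite c1 cos0.
      rewrite in_itv /=; apply/andP; split.
        by rewrite divr_ge0 // ?ler0n // mulr_ge0 // ltW // pi_gt0.
      rewrite ler_pdivrMr ?ltr0n ?prime_gt0 // mulrC ler_pM2l ?pi_gt0 //.
      by rewrite ler_nat.
    by rewrite in_itv /= lexx ltW // pi_gt0.
  apply/eqP; rewrite mulf_eq0 invr_eq0 (negbTE P0) orbF mulf_eq0 negb_or.
  by rewrite pnatr_eq0 /= gt_eqF // pi_gt0.
have [m pm mP] := prim_order_exists (prime_gt0 pP) wP.
case/primeP: pP => _ /(_ m mP) /orP [/eqP m1|/eqP e]; last by move: pm; rewrite e.
by move: pm; rewrite m1 => /prim_expr_order; rewrite expr1 => /eqP; rewrite (negbTE w1).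
Qed.

Lemma geom0 (F : fieldType) (P : nat) (q : F) : (1 < P)%N -> q ^+ P = 1 -> q != 1 ->
  \sum_(v : 'Z_P) q ^+ v = 0.
Proof.
move=> P1 qP q1.
have h := subrX1 q (Zp_trunc P).+2.
have qn : q ^+ (Zp_trunc P).+2 = 1 by rewrite Zp_cast.
rewrite qn subrr in h.

move: h => /esym/eqP; rewrite mulf_eq0 subr_eq0 (negbTE q1) /= => /eqP e.
exact: e.
Qed.

Lemma orth (R : realType) (P : nat) (b b' : 'Z_P) : prime P ->
  \sum_(v : 'Z_P) (expi (2 * pi / P%:R : R) ^+ (v * b)%N)^-1 * expi (2 * pi / P%:R : R) ^+ (v * b')%N
  = if b == b' then P%:R else 0.
Proof.
move=> pP; have P1 : (1 < P)%N by apply: prime_gt1.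
have pw := omega_prim R pP.
set w := expi _ in pw *.
have wP : w ^+ P = 1 by apply: prim_expr_order.
have w0 : w != 0.
  apply/eqP => w0; move: wP; rewrite w0 expr0n (gtn_eqF (prime_gt0 pP)) => /eqP; by rewrite eq_sym oner_eq0.
set q := (w ^+ b)^-1 * w ^+ b'.
rewrite (eq_bigr (fun v : 'Z_P => q ^+ v)) => [|v _]; last first.
  by rewrite /q exprMn exprVn -!exprM [(v * b)%N]mulnC [(v * b')%N]mulnC.
case: eqP => [e|bb].
  rewrite /q e.
  rewrite mulVf ?expf_neq0 // (eq_bigr (fun _ => 1)) => [|v _]; last by rewrite expr1n.
  by rewrite sumr_const card_ord Zp_cast.
apply: geom0 => //.
  by rewrite /q exprMn exprVn -!exprM mulnC exprM wP expr1n mulnC exprM wP expr1n invr1 mul1r.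
apply/eqP => q1; apply: bb.
have : w ^+ b' == w ^+ b.
  by apply/eqP; rewrite -[LHS]mul1r -(mulfV (expf_neq0 b w0)) -mulrA -/q q1 mulr1.
rewrite (eq_prim_root_expr pw) !modn_small; last 2 first.
  by rewrite -[X in (_ < X)%N](Zp_cast P1); exact: ltn_ord.
  by rewrite -[X in (_ < X)%N](Zp_cast P1); exact: ltn_ord.
by move/eqP => e; apply: val_inj.
Qed.

Lemma conjM' (R : realType) (x y : R[i]) : conjc (x * y) = conjc x * conjc y.
Proof. exact: rmorphM. Qed.

Lemma conjS' (R : realType) (I : finType) (F : I -> R[i]) : conjc (\sum_i F i) = \sum_i conjc (F i).
Proof. exact: rmorph_sum. Qed.

Lemma conjR' (R : realType) (x : R) : conjc (x%:C) = x%:C :> R[i].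
Proof. exact: conjc_real. Qed.

Lemma Cgr_real (R : realType) (P : nat) (g r : 'Z_P -> R) : prime P ->
  Cgr g r = (\sum_(b : 'Z_P) g b * r b)%:C.
Proof.
move=> pP; have P1 : (1 < P)%N by apply: prime_gt1.
have P0 : (P%:R : R) != 0 by rewrite pnatr_eq0 -lt0n prime_gt0.
set c : R[i] := ((Num.sqrt (P%:R : R))^-1)%:C.
set w := expi (2 * pi / P%:R : R).
have E0 (n : nat) : (2 * pi * n%:R / P%:R : R) = n%:R * (2 * pi / P%:R) by ring.
have E1 (v b : 'Z_P) : expi (- (2 * pi * ((v * b)%N)%:R / P%:R) : R) = (w ^+ (v * b))^-1.
  by rewrite expiN E0 expiMn.
have E2 (v : 'Z_P) : conjc (F1 (fun b => (r b)%:C) v) = c * \sum_(b : 'Z_P) (r b)%:C * w ^+ (v * b).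
  rewrite /F1 conjM' conjR' conjS'; congr (_ * _); apply: eq_bigr => b _.
  by rewrite conjM' conjR' expiJ opprK E0 expiMn.
rewrite /Cgr.
under eq_bigr => v _ do rewrite E2 /F1.
transitivity (c * c * \sum_(v : 'Z_P) \sum_(b : 'Z_P) \sum_(b' : 'Z_P)
    (g b)%:C * (r b')%:C * ((w ^+ (v * b))^-1 * w ^+ (v * b'))).
  rewrite mulr_sumr; apply: eq_bigr => v _.
  rewrite mulrACA; congr (_ * _); rewrite mulr_suml; apply: eq_bigr => b _.
  rewrite mulr_sumr; apply: eq_bigr => b' _.
  by rewrite E1; ring.
rewrite exchange_big /=.
under eq_bigr => b _ do rewrite exchange_big /=.
transitivity (c * c * \sum_(b : 'Z_P) \sum_(b' : 'Z_P)
    (g b)%:C * (r b')%:C * (if b == b' then P%:R else 0)).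
  congr (_ * _); apply: eq_bigr => b _; apply: eq_bigr => b' _.
  by rewrite -mulr_sumr orth.
transitivity (c * c * \sum_(b : 'Z_P) (g b)%:C * (r b)%:C * P%:R).
  congr (_ * _); apply: eq_bigr => b _.
  rewrite (bigD1 b) //= eqxx big1 ?addr0 // => b' /negbTE; rewrite eq_sym => ->.
  by rewrite mulr0.
have cc : c * c * P%:R = 1.
  have -> : c * c * P%:R = ((Num.sqrt (P%:R : R))^-1 * (Num.sqrt (P%:R : R))^-1 * P%:R)%:C.
    by rewrite !rmorphM rmorph_nat.
  by rewrite -invfM -expr2 sqr_sqrtr ?ler0n // mulVf.
rewrite -mulr_suml.
transitivity ((c * c * P%:R) * \sum_(i : 'Z_P) (g i)%:C * (r i)%:C); first by ring.
by rewrite cc mul1r rmorph_sum; apply: eq_bigr => b _; rewrite rmorphM.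
Qed.

Unset Implicit Arguments.
Theorem theorem2 (R : realType) (P D : nat) (g r : 'Z_P -> R) :
  prime P -> (1 <= D)%N ->
  \sum_(b : 'Z_P) g b = 0 ->
  \sum_(b : 'Z_P) `|g b| ^+ 2 = 1 ->
  \sum_(b : 'Z_P) `|r b| ^+ 2 = 1 ->
  Cgr g r != 0 ->
  forall (f : {ffun 'I_D -> 'Z_P} -> R) (x : {ffun 'I_D -> 'Z_P}),
    (f x)%:C = (Cgr g r)^-1 * (Snet g (ridgelet r f) x)%:C.
Proof.
move=> pP _ g0 _ _ C0 f x.
rewrite real_part // Cgr_real // in C0 *.
have -> : \sum_(c : 'Z_P) r c * g c = \sum_(c : 'Z_P) g c * r c.
  by apply: eq_bigr => c _; rewrite mulrC.
set G := \sum_(c : 'Z_P) g c * r c.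
have -> : (f x * G)%:C = (f x)%:C * G%:C :> R[i] by exact: rmorphM.
by rewrite mulrCA mulVf // mulr1.
Qed.
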